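(* Let $S_{r,N}$ be a nontrivial atomic exponential Puiseux semiring. For $x\in S_{r,N}$ and $m\in\mathbb{N}$ let $R_x(r^{s_m})=\mathsf{Z}(x)\cap(r^{s_m}+\mathsf{Z}(S_{r,N}))$ (the factorizations of $x$ in which the atom $r^{s_m}$ occurs). Then: (1) $\mathrm{Betti}(S_{r,N})=\{\mathsf{n}(r)^{\delta_n}r^{s_n}: n\in\mathbb{N}\}$; (2) if $x=\mathsf{n}(r)^{\delta_n}r^{s_n}$ for some $n\in\mathbb{N}$, then the set of $\mathcal{R}$-classes of $\mathsf{Z}(x)$ is exactly $\{R_x(r^{s_n}),R_x(r^{s_{n+1}})\}$.
   Context: $\mathbb{N}=\{0,1,2,\dots\}$. A numerical monoid $N$ is an additive submonoid of $\mathbb{N}$ with finite complement in $\mathbb{N}$. For $r\in\mathbb{Q}_{>0}$ write $r=\mathsf{n}(r)/\mathsf{d}(r)$ in lowest terms. The exponential Puiseux semiring $S_{r,N}$ is the additive submonoid of $\mathbb{Q}_{\ge0}$ generated by $\{r^k:k\in N\}$; it is nontrivial if $r\notin\mathbb{N}$, and then it is atomic iff $\mathsf{n}(r)>1$, with atoms $r^s$, $s\in N$. Let $s_0<s_1<\cdots$ be the elements of $N$ in increasing order and $\delta_n=s_{n+1}-s_n$. For an atomic monoid $M$, $\mathsf{Z}(M)$ is the free commutative monoid on the atoms, $\pi:\mathsf{Z}(M)\to M$ the evaluation homomorphism, $\mathsf{Z}(x)=\pi^{-1}(x)$. For factorizations $z=\sum\alpha_a a$, $z'=\sum\beta_a a$,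 $\gcd(z,z')=\sum\min(\alpha_a,\beta_a)a$. Two factorizations $z,z'\in\mathsf{Z}(x)$ are $\mathcal{R}$-related if there is a chain $z=z_1,\dots,z_n=z'$ in $\mathsf{Z}(x)$ with $\gcd(z_i,z_{i+1})$ nonzero (nonempty) for all $i$. An element $x$ is a Betti element if $\mathsf{Z}(x)$ has more than one $\mathcal{R}$-class; $\mathrm{Betti}(M)$ is the set of Betti elements. *)

(* Defs.v *)
From mathcomp Require Import all_boot all_order all_algebra.
Set Implicit Arguments. Unset Strict Implicit. Unset Printing Implicit Defensive.
Import Order.TTheory GRing.Theory Num.Theory.
Local Open Scope ring_scope.

(* A numerical monoid: submonoid of N with finite complement
   (finite complement <-> all sufficiently large naturals belong to N). *)
Definition numerical_monoid (N : nat -> Prop) : Prop :=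
  N 0%N /\ (forall a b, N a -> N b -> N (a + b)%N) /\
  exists B : nat, forall n, (B <= n)%N -> N n.

Definition increasing_enum (N : nat -> Prop) (s : nat -> nat) : Prop :=
  (forall n, (s n < s n.+1)%N) /\ (forall k, N k <-> exists n, s n = k).

Definition inS (r : rat) (N : nat -> Prop) (x : rat) : Prop :=
  exists l : seq nat, (forall k, k \in l -> N k) /\ x = \sum_(k <- l) r ^+ k.

(* atoms of S_{r,N} (the only unit of this reduced monoid is 0) *)
Definition is_atom (r : rat) (N : nat -> Prop) (a : rat) : Prop :=
  inS r N a /\ a != 0 /\
  forall b c, inS r N b -> inS r N c -> a = b + c -> b = 0 \/ c = 0.

(* factorizations of x, represented as finite lists (multisets) of atoms *)
Definition is_fact (r : rat) (N : nat -> Prop) (x : rat) (z : seq rat) : Prop :=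
  (forall a, a \in z -> is_atom r N a) /\ \sum_(a <- z) a = x.

Definition atomic (r : rat) (N : nat -> Prop) : Prop :=
  forall x, inS r N x -> x != 0 -> exists z, is_fact r N x z.

(* gcd(z, z') is nonzero iff z and z' share an atom *)
Definition gcd_nonzero (z z' : seq rat) : Prop := exists a, a \in z /\ a \in z'.

Inductive Rrel (r : rat) (N : nat -> Prop) (x : rat) : seq rat -> seq rat -> Prop :=
| Rrel_refl z : is_fact r N x z -> Rrel r N x z z
| Rrel_step z1 z2 z3 : Rrel r N x z1 z2 -> is_fact r N x z3 ->
    gcd_nonzero z2 z3 -> Rrel r N x z1 z3.

Definition is_Betti (r : rat) (N : nat -> Prop) (x : rat) : Prop :=
  exists z z', is_fact r N x z /\ is_fact r N x z' /\ ~ Rrel r N x z z'.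

Definition Rx (r : rat) (N : nat -> Prop) (x a : rat) (z : seq rat) : Prop :=
  is_fact r N x z /\ a \in z.

Definition betti_elt (r : rat) (s : nat -> nat) (n : nat) : rat :=
  (numq r)%:~R ^+ (s n.+1 - s n) * r ^+ s n.

Definition Rclass_is (r : rat) (N : nat -> Prop) (x : rat) (z : seq rat)
  (P : seq rat -> Prop) : Prop :=
  forall z', Rrel r N x z z' <-> P z'.

(* Main.v *)
Require Import Defs.
From mathcomp Require Import all_boot all_order all_algebra.
From mathcomp Require Import zify ring lra.
From Stdlib Require Import Classical_Prop.
Import Order.TTheory GRing.Theory Num.Theory.
Local Open Scope ring_scope.

Section Main.
Variable r : rat.
Variable N : nat -> Prop.
Variable s : nat -> nat.
Hypothesis r_gt0 : 0 < r.
Hypothesis hN : numerical_monoid N.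
Hypothesis hs : increasing_enum N s.
Hypothesis rnonint : ~ (exists m : nat, r = m%:R).

Definition p := `|numq r|%N.
Definition q := `|denq r|%N.

Lemma numq_p : numq r = p%:Z.
Proof. by rewrite /p gez0_abs // ltW // numq_gt0. Qed.
Lemma denq_q : denq r = q%:Z.
Proof. by rewrite /q gez0_abs // ltW // denq_gt0. Qed.

Lemma r_pq : r = p%:R / q%:R.
Proof. by rewrite -{1}[r]divq_num_den numq_p denq_q. Qed.

Lemma p_gt0 : (0 < p)%N.
Proof. have := numq_gt0 r; rewrite r_gt0 numq_p; lia. Qed.
Lemma q_gt0 : (0 < q)%N.
Proof. have := denq_gt0 r; rewrite denq_q; lia. Qed.

Lemma q_gt1 : (1 < q)%N.
Proof.
have := q_gt0; case Hq: q => [|[|n]] //= _.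
exfalso; apply: rnonint; exists p; by rewrite r_pq Hq divr1.
Qed.

Lemma cop : coprime p q.
Proof. exact: coprime_num_den. Qed.

Lemma qR_neq0 : (q%:R : rat) != 0.
Proof. by rewrite pnatr_eq0 -lt0n q_gt0. Qed.

Lemma rexp e : r ^+ e = (p ^ e)%:R / (q ^ e)%:R.
Proof. by rewrite r_pq exprMn exprVn !natrX. Qed.

Lemma cast e t : (e <= t)%N ->
  ((p ^ e * q ^ (t - e))%:R : rat) = (q ^ t)%:R * r ^+ e.
Proof.
move=> het; rewrite rexp -{2}(subnK het) expnD !natrM !natrX.
have qe : (q%:R : rat) ^+ e != 0 by rewrite expf_neq0 // qR_neq0.
by field.
Qed.

Lemma trade_eq d m :
  ((p ^ d)%:R : rat) * r ^+ m = (q ^ d)%:R * r ^+ (m + d).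
Proof.
rewrite exprD !natrX [r ^+ d]rexp !natrX.
have qe : (q%:R : rat) ^+ d != 0 by rewrite expf_neq0 // qR_neq0.
by field.
Qed.

Lemma r_neq1 : r != 1.
Proof. apply/eqP => h; apply: rnonint; by exists 1%N. Qed.

Lemma rexp_inj i j : r ^+ i = r ^+ j -> i = j.
Proof.
wlog hij : i j / (i <= j)%N.
  move=> H; case: (leqP i j) => h; first exact: H.
  by move=> e; symmetry; apply: H; [exact: ltnW|].
move=> e; move: e; rewrite -(subnK hij) exprD => e.
have ri : r ^+ i != 0 by rewrite expf_neq0 // gt_eqF.
have : r ^+ (j - i) = 1.
  by apply: (mulIf ri); rewrite mul1r.
move/eqP; rewrite ieexprn_weq1 ?ltW // (negbTE r_neq1) orbF => /eqP ->.
by rewrite add0n.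
Qed.

Lemma s_lt i j : (i < j)%N -> (s i < s j)%N.
Proof.
case: hs => hinc _; elim: j => // j IH; rewrite ltnS leq_eqVlt => /orP [/eqP ->|h].
  exact: hinc.
exact: ltn_trans (IH h) (hinc j).
Qed.
Lemma s_le i j : (i <= j)%N -> (s i <= s j)%N.
Proof. rewrite leq_eqVlt => /orP [/eqP ->//|h]; exact/ltnW/s_lt. Qed.
Lemma s_leE i j : (s i <= s j)%N = (i <= j)%N.
Proof.
apply/idP/idP; last exact: s_le.
by move=> h; rewrite leqNgt; apply/negP => /s_lt; rewrite ltnNge h.
Qed.
Lemma s_ltE i j : (s i < s j)%N = (i < j)%N.
Proof. by rewrite !ltnNge s_leE. Qed.
Lemma Ns i : N (s i).
Proof. case: hs => _ h; apply h; by exists i. Qed.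
Lemma Nex {k} : N k -> exists i, s i = k.
Proof. case: hs => _ h; exact: (proj1 (h k)). Qed.
Lemma gap n {e} : N e -> (e <= s n)%N \/ (s n.+1 <= e)%N.
Proof.
case/Nex => i <-; rewrite s_leE; case: (leqP i n) => h; first by left.
by right; rewrite s_leE.
Qed.
Lemma s_min {e} : N e -> (s 0 <= e)%N.
Proof. case/Nex => i <-; by rewrite s_leE. Qed.

Lemma sum_nseqr (F : nat -> rat) n a : \sum_(e <- nseq n a) F e = F a *+ n.
Proof. elim: n => [|n IH]; by rewrite ?big_nil // big_cons IH mulrS. Qed.
Lemma sum_nseqn (F : nat -> nat) n a : (\sum_(e <- nseq n a) F e = n * F a)%N.
Proof. elim: n => [|n IH]; by rewrite ?big_nil // big_cons IH mulSn. Qed.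

Lemma filter1 (t : nat) l : [seq e <- l | e == t] = nseq (count_mem t l) t.
Proof. elim: l => //= a l IH; case: eqP => [->|_] /=; by rewrite IH. Qed.

Lemma perm_split (t : nat) l :
  perm_eq l (nseq (count_mem t l) t ++ [seq e <- l | e != t]).
Proof.
rewrite -filter1 perm_sym.
have h := perm_filterC (fun e => e == t) l.
by rewrite h.
Qed.

Lemma rpow_gt0 e : 0 < r ^+ e.
Proof. exact: exprn_gt0. Qed.

Lemma sumr_ge0 l : 0 <= \sum_(e <- l) r ^+ e.
Proof. by apply: sumr_ge0 => e _; rewrite ltW // rpow_gt0. Qed.

Lemma sumr_eq0 l : \sum_(e <- l) r ^+ e = 0 -> l = [::].
Proof.
case: l => // a l; rewrite big_cons => h; exfalso.
have := rpow_gt0 a; have := sumr_ge0 l; lra.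
Qed.

Definition D (l : seq nat) t := (\sum_(e <- l) p ^ e * q ^ (t - e))%N.

Lemma Dcast l t : (forall e, e \in l -> (e <= t)%N) ->
  ((D l t)%:R : rat) = (q ^ t)%:R * \sum_(e <- l) r ^+ e.
Proof.
move=> H; rewrite /D natr_sum mulr_sumr; apply: eq_big_seq => e he.
by rewrite cast // H.
Qed.

Lemma Ddvdq l h t : (forall e, e \in l -> (e <= h)%N) -> (h <= t)%N ->
  (q ^ (t - h) %| D l t)%N.
Proof.
move=> H ht; rewrite /D; elim: l H => [|a l IH] H; first by rewrite big_nil.
rewrite big_cons; apply: dvdn_add; last by apply: IH => e he; apply: H; rewrite inE he orbT.
apply: dvdn_mull; have ha : (a <= h)%N by apply: H; rewrite inE eqxx.
by rewrite -(subnK (leq_sub2l t ha)) expnD dvdn_mull.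
Qed.

Lemma DdvdqS l t : (forall e, e \in l -> (e < t)%N) -> (q %| D l t)%N.
Proof.
move=> H; rewrite /D; elim: l H => [|a l IH] H; first by rewrite big_nil.
rewrite big_cons; apply: dvdn_add; last by apply: IH => e he; apply: H; rewrite inE he orbT.
apply: dvdn_mull; have ha : (a < t)%N by apply: H; rewrite inE eqxx.
by rewrite -(subnK (_ : 1 <= t - a)%N) ?subn_gt0 // expnD dvdn_mull // expn1.
Qed.

Lemma Ddvdp l u t : (forall e, e \in l -> (u <= e)%N) -> (p ^ u %| D l t)%N.
Proof.
move=> H; rewrite /D; elim: l H => [|a l IH] H; first by rewrite big_nil.
rewrite big_cons; apply: dvdn_add; last by apply: IH => e he; apply: H; rewrite inE he orbT.
apply: dvdn_mulr; have ha : (u <= a)%N by apply: H; rewrite inE eqxx.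
by rewrite -(subnK ha) expnD dvdn_mull.
Qed.

Lemma Dnil l t : D l t = 0%N -> l = [::].
Proof.
rewrite /D; case: l => // a l; rewrite big_cons => h; exfalso.
have : (0 < p ^ a * q ^ (t - a))%N by rewrite muln_gt0 !expn_gt0 p_gt0 q_gt0.
lia.
Qed.

Lemma le_sumn l e : e \in l -> (e <= sumn l)%N.
Proof.
elim: l => //= a l IH; rewrite inE => /orP [/eqP ->|h]; first exact: leq_addr.
exact: leq_trans (IH h) (leq_addl _ _).
Qed.

Lemma sum_filter2 (F : nat -> rat) (P : pred nat) l :
  \sum_(e <- l) F e = \sum_(e <- [seq e <- l | P e]) F e + \sum_(e <- [seq e <- l | ~~ P e]) F e.
Proof. by rewrite (bigID P) /= !big_filter. Qed.

Lemma qhR_neq0 h : ((q ^ h)%:R : rat) != 0.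
Proof. by rewrite pnatr_eq0 expn_eq0 negb_and -lt0n q_gt0. Qed.

Lemma split_gen l h t u : (h < t)%N ->
  (forall e, e \in l -> (e <= h)%N \/ (t <= e)%N) ->
  \sum_(e <- l) r ^+ e = (p ^ u)%:R / (q ^ h)%:R ->
  [/\ (D [seq e <- l | (e <= h)%N] h <= p ^ u)%N,
      (p ^ t %| p ^ u - D [seq e <- l | (e <= h)%N] h)%N &
      ((D [seq e <- l | (e <= h)%N] h)%:R
        + (q ^ h)%:R * \sum_(e <- [seq e <- l | ~~ (e <= h)%N]) r ^+ e = (p ^ u)%:R :> rat)].
Proof.
move=> ht Hl Hs.
set L := [seq e <- l | (e <= h)%N]; set U := [seq e <- l | ~~ (e <= h)%N].
set A := D L h.
have AL : (A%:R : rat) = (q ^ h)%:R * \sum_(e <- L) r ^+ e.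
  by apply: Dcast => e; rewrite mem_filter => /andP [].
have E : (A%:R : rat) + (q ^ h)%:R * \sum_(e <- U) r ^+ e = (p ^ u)%:R.
  rewrite AL -mulrDr -sum_filter2 Hs; have := qhR_neq0 h; by move=> ?; field.
have Ale : (A <= p ^ u)%N.
  rewrite -(ler_nat rat) -E lerDl; apply: mulr_ge0 => //; exact: sumr_ge0.
split => //.
set M := (h + sumn l)%N.
have UM : forall e, e \in U -> (e <= M)%N.
  move=> e; rewrite mem_filter => /andP [_ he]; apply: leq_trans (@le_sumn _ _ he) _.
  exact: leq_addl.
have hM : (h <= M)%N by exact: leq_addr.
have DU : D U M = (q ^ (M - h) * (p ^ u - A))%N.
  apply/eqP; rewrite -(eqr_nat rat) Dcast // natrM natrB //.
  by rewrite -E [_%:R + _]addrC addrK mulrA -natrM -expnD subnK.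
have : (p ^ t %| D U M)%N.
  apply: Ddvdp => e; rewrite mem_filter => /andP [he1 he2].
  case: (Hl e he2) => // he3; by rewrite he3 in he1.
by rewrite DU Gauss_dvdr // coprimeXl // coprimeXr // cop.
Qed.

Lemma q_ndvd_pX u : ~~ (q %| p ^ u)%N.
Proof.
apply/negP => h.
have : coprime q q by apply: coprime_dvdl h _; rewrite coprimeXl // cop.
rewrite /coprime gcdnn => /eqP h1; have := q_gt1; lia.
Qed.

Lemma inS1 {e} : N e -> inS r N (r ^+ e).
Proof. move=> he; exists [:: e]; split; last by rewrite big_seq1. by move=> k; rewrite inE => /eqP ->. Qed.

Lemma inS_sum l : (forall e, e \in l -> N e) -> inS r N (\sum_(e <- l) r ^+ e).
Proof. by move=> H; exists l. Qed.

Lemma atom_exp {a} : is_atom r N a -> exists e, N e /\ a = r ^+ e.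
Proof.
case=> [[l [Hl ->]] [nz Hat]]; case: l Hl nz Hat => [|e l] Hl nz Hat.
  by rewrite big_nil eqxx in nz.
exists e; split; first by apply: Hl; rewrite inE eqxx.
case: l Hl nz Hat => [|e' l] Hl nz Hat; first by rewrite big_seq1.
exfalso; move: (Hat (r ^+ e) (\sum_(k <- e' :: l) r ^+ k)).
case.
- by apply: inS1; apply: Hl; rewrite inE eqxx.
- by apply: inS_sum => k hk; apply: Hl; rewrite inE hk orbT.
- by rewrite big_cons.
- by move/eqP; rewrite expf_eq0 (gt_eqF r_gt0) andbF.
- by move/sumr_eq0.
Qed.

Hypothesis hat : atomic r N.

Lemma p_gt1 : (1 < p)%N.
Proof.
have := p_gt0; case Hp: p => [|[|n]] //= _; exfalso.
have noatom : forall a, ~ is_atom r N a.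
  move=> a ha; have [e [he ea]] := atom_exp ha; subst a.
  case: ha => _ [_ Hat].
  case: hN => _ [_ [B HB]].
  have Nem : N (e + B.+1)%N by apply: HB; lia.
  have E : r ^+ e = r ^+ (e + B.+1) + \sum_(k <- nseq (q ^ B.+1 - 1) (e + B.+1)) r ^+ k.
    have := trade_eq B.+1 e; rewrite Hp exp1n mul1r => ->.
    have Q1 : (q ^ B.+1 - 1).+1 = (q ^ B.+1)%N.
      have : (0 < q ^ B.+1)%N by rewrite expn_gt0 q_gt0.
      lia.
    by rewrite sum_nseqr -mulrS Q1 mulr_natl.
  case: (Hat _ _ (inS1 Nem) _ E).
  - by apply: inS_sum => k; rewrite mem_nseq => /andP [_ /eqP ->].
  - by move/eqP; rewrite expf_eq0 (gt_eqF r_gt0) andbF.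
  - move/sumr_eq0; rewrite /nseq; case H: (q ^ B.+1 - 1)%N => //.
    have : (2 <= q ^ B.+1)%N.
      apply: leq_trans q_gt1 _; rewrite -{1}(expn1 q) leq_pexp2l ?q_gt0 //.
    lia.
have h0 : N 0%N by case: hN.
have [z [Hz Hsum]] := hat _ (inS1 h0) (oner_neq0 _).
case: z Hz Hsum => [|a z] Hz Hsum.
  by move: Hsum; rewrite big_nil expr0 => /eqP; rewrite eq_sym oner_eq0.
by apply: (noatom a); apply: Hz; rewrite inE eqxx.
Qed.

Lemma exp_atom j : N j -> is_atom r N (r ^+ j).
Proof.
move=> hj; split; first exact: inS1.
split; first by rewrite expf_eq0 (gt_eqF r_gt0) andbF.
move=> b c [l1 [H1 ->]] [l2 [H2 ->]] E.
have El : \sum_(e <- l1 ++ l2) r ^+ e = r ^+ j by rewrite big_cat.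
case: (boolP (j \in l1 ++ l2)) => hjl.
  move: El; rewrite (perm_big _ (perm_to_rem hjl)) big_cons => El.
  have : \sum_(e <- rem j (l1 ++ l2)) r ^+ e = 0.
    by apply: (addrI (r ^+ j)); rewrite El addr0.
  move/sumr_eq0 => /(congr1 size); rewrite size_rem // size_cat.
  case: l1 {H1 E El hjl} => [|a1 l1]; first by left; rewrite big_nil.
  clear H2.
  case: l2 => [|a2 l2]; first by right; rewrite big_nil.
  by rewrite /= addnS.
exfalso.
have side : forall e, e \in l1 ++ l2 -> (e <= j)%N \/ (j.+1 <= e)%N.
  move=> e he; have : e != j by apply/eqP => ej; rewrite -ej he in hjl.
  lia.
have [Ale Hdv _] := split_gen (l1 ++ l2) j j.+1 j (ltnSn j) side (etrans El (rexp j)).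
set A := D _ _ in Ale Hdv.
have HA : A = (p ^ j)%N.
  move: Hdv; case H: (p ^ j - A)%N => [|m] Hdv; first lia.
  have := dvdn_leq (ltn0Sn m) Hdv; rewrite expnS.
  have : (p ^ j * 2 <= p * p ^ j)%N by rewrite mulnC leq_mul2r p_gt1 orbT.
  have : (0 < p ^ j)%N by rewrite expn_gt0 p_gt0.
  lia.
have : (q %| A)%N.
  apply: DdvdqS => e; rewrite mem_filter => /andP [h1 h2].
  by rewrite ltn_neqAle h1 andbT; apply/eqP => ej; rewrite -ej h2 in hjl.
by rewrite HA (negbTE (q_ndvd_pX j)).
Qed.

Definition R (e : nat) : rat := r ^+ e.

Lemma fact_exps x z : is_fact r N x z ->
  exists l, (forall e, e \in l -> N e) /\ z = map R l /\ \sum_(e <- l) r ^+ e = x.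
Proof.
case=> Ha <-.
suff [l [Hl ->]] : exists l, (forall e, e \in l -> N e) /\ z = map R l.
  by exists l; rewrite big_map.
elim: z Ha => [|a z IH] Ha; first by exists [::].
have [l [Hl ->]] : exists l, (forall e, e \in l -> N e) /\ z = map R l.
  by apply: IH => b hb; apply: Ha; rewrite inE hb orbT.
have [e [he ->]] := atom_exp (Ha a (mem_head _ _)).
exists (e :: l); split => // k; rewrite inE => /orP [/eqP ->//|]; exact: Hl.
Qed.

Lemma exps_fact l : (forall e, e \in l -> N e) ->
  is_fact r N (\sum_(e <- l) r ^+ e) (map R l).
Proof.
move=> Hl; split; last by rewrite big_map.
by move=> a /mapP [e he ->]; apply: exp_atom; apply: Hl.
Qed.

Lemma Rrel_fact {x z1 z2} : Rrel r N x z1 z2 -> is_fact r N x z1 /\ is_fact r N x z2.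
Proof. elim=> [z hz|a b c _ [h1 _] h3 _] //. Qed.

Lemma Rrel_one x z1 z2 : is_fact r N x z1 -> is_fact r N x z2 ->
  gcd_nonzero z1 z2 -> Rrel r N x z1 z2.
Proof. move=> h1 h2 g; apply: Rrel_step g => //; exact: Rrel_refl. Qed.

Lemma Rrel_trans x z1 z2 z3 : Rrel r N x z1 z2 -> Rrel r N x z2 z3 -> Rrel r N x z1 z3.
Proof.
move=> h12 h23; elim: h23 h12 => // a b c _ IH hc g h; apply: Rrel_step g => //.
exact: IH.
Qed.

Lemma Rrel_sym x z1 z2 : Rrel r N x z1 z2 -> Rrel r N x z2 z1.
Proof.
elim=> [z hz|a b c hab IH hc [e [e1 e2]]]; first exact: Rrel_refl.
apply: Rrel_trans IH; apply: Rrel_one => //; first by case: (Rrel_fact hab).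
by exists e.
Qed.

Lemma p_ndvd_qX u : ~~ (p %| q ^ u)%N.
Proof.
apply/negP => h.
have : coprime p p by apply: coprime_dvdr h _; rewrite coprimeXr // cop.
rewrite /coprime gcdnn => /eqP h1; have := p_gt1; lia.
Qed.

Lemma betti_pq n : betti_elt r s n = (p ^ s n.+1)%:R / (q ^ s n)%:R.
Proof.
rewrite /betti_elt numq_p rexp -[in RHS](subnK (ltnW (hs.1 n))) expnD natrM !natrX.
have -> : (p%:Z)%:~R = p%:R :> rat by [].
have qe : (q%:R : rat) ^+ s n != 0 by rewrite expf_neq0 // qR_neq0.
by field.
Qed.

Lemma filter_nilP (P : pred nat) l : [seq e <- l | P e] = [::] -> forall e, e \in l -> ~~ P e.
Proof.
move=> h e he; apply/negP => pe.
have : e \in [seq e <- l | P e] by rewrite mem_filter pe he.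
by rewrite h.
Qed.

Lemma bclass n l : (forall e, e \in l -> N e) ->
  \sum_(e <- l) r ^+ e = betti_elt r s n ->
  ((forall e, e \in l -> (e <= s n)%N) /\ s n \in l) \/
  ((forall e, e \in l -> (s n.+1 <= e)%N) /\ s n.+1 \in l).
Proof.
move=> Hl Hs; rewrite betti_pq in Hs.
set h := s n in Hs *; set t := s n.+1 in Hs *.
have ht : (h < t)%N by exact: hs.1.
have side : forall e, e \in l -> (e <= h)%N \/ (t <= e)%N.
  by move=> e he; apply: gap; apply: Hl.
have [Ale Hdv E] := split_gen l h t t ht side Hs.
set A := D _ _ in Ale Hdv E.
have pt0 : (0 < p ^ t)%N by rewrite expn_gt0 p_gt0.
have [HA|HA] : A = (p ^ t)%N \/ A = 0%N.
  move: Hdv; case H: (p ^ t - A)%N => [|m] Hdv; first by left; lia.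
  have := dvdn_leq (ltn0Sn m) Hdv; right; lia.
- left.
  have allh : forall e, e \in l -> (e <= h)%N.
    have {}E : (q ^ h)%:R * \sum_(e <- [seq e <- l | ~~ (e <= h)%N]) r ^+ e = 0.
      by apply: (addrI (A%:R)); rewrite E HA addr0.
    have : \sum_(e <- [seq e <- l | ~~ (e <= h)%N]) r ^+ e = 0.
      by apply/eqP; move/eqP: E; rewrite mulf_eq0 (negbTE (qhR_neq0 h)).
    move/sumr_eq0/filter_nilP => H e he; by have := H e he; rewrite negbK.
  split => //; apply/negPn/negP => hn.
  have : (q %| A)%N.
    apply: DdvdqS => e; rewrite mem_filter => /andP [h1 h2].
    by rewrite ltn_neqAle h1 andbT; apply/eqP => ej; rewrite -ej h2 in hn.
  by rewrite HA (negbTE (q_ndvd_pX t)).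
- right.
  have allt : forall e, e \in l -> (t <= e)%N.
    move: HA => /Dnil /filter_nilP H e he; have := H e he.
    by case: (side e he) => // ->.
  split => //; apply/negPn/negP => hn.
  set M := (h + sumn l)%N.
  have hM : (h <= M)%N by exact: leq_addr.
  have DM : D l M = (q ^ (M - h) * p ^ t)%N.
    apply/eqP; rewrite -(eqr_nat rat) Dcast; last first.
      move=> e he; apply: leq_trans (@le_sumn _ _ he) _; exact: leq_addl.
    rewrite Hs natrM -(subnK hM) expnD natrM addnK.
    have := qhR_neq0 h; move=> ?; apply/eqP; by field.
  have : (p ^ t.+1 %| D l M)%N.
    apply: Ddvdp => e he; rewrite ltn_neqAle allt // andbT.
    by apply/eqP => ej; rewrite ej he in hn.
  rewrite DM expnS dvdn_pmul2r //.
  by rewrite (negbTE (p_ndvd_qX _)).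
Qed.

Definition typ (P : pred nat) (z : seq rat) := forall a, a \in z -> exists e, P e /\ a = r ^+ e.

Lemma class_gen x (P Q : pred nat) e0 e1 :
  (forall e, P e -> Q e -> False) -> P e0 -> Q e1 ->
  (forall z, is_fact r N x z -> (typ P z /\ r ^+ e0 \in z) \/ (typ Q z /\ r ^+ e1 \in z)) ->
  forall z, is_fact r N x z -> r ^+ e0 \in z -> Rclass_is r N x z (Rx r N x (r ^+ e0)).
Proof.
move=> disj P0 Q1 H z hz hz0.
have tP : forall z, is_fact r N x z -> r ^+ e0 \in z -> typ P z.
  move=> z' hz' h0; case: (H z' hz') => [[tp _]//|[tq _]].
  have [e [qe /rexp_inj ee]] := tq _ h0; subst e; exfalso; exact: disj P0 qe.
have hP : forall z, is_fact r N x z -> typ P z -> r ^+ e0 \in z.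
  move=> z' hz' tp; case: (H z' hz') => [[_ h0]//|[_ h1]].
  have [e [pe /rexp_inj ee]] := tp _ h1; subst e; exfalso; exact: disj pe Q1.
move=> z'; split.
- move=> hr; suff : typ P z'.
    by move=> tz; have [_ f'] := Rrel_fact hr; split => //; apply: hP.
  move: hz0; elim: hr => [z0 h0 h00|a b c hab IH hc [w [w1 w2]] h00]; first exact: tP.
  case: (H c hc) => [[tp _]//|[tq _]].
  have [e [pe ee]] := IH h00 _ w1; have [e' [qe ee']] := tq _ w2.
  rewrite ee in ee'; move/rexp_inj: ee' => ee'; subst e'; exfalso; exact: disj pe qe.
- case=> hz' h0; apply: Rrel_one => //; by exists (r ^+ e0).
Qed.

Lemma typeB n z : is_fact r N (betti_elt r s n) z ->
  (typ (fun e => e <= s n)%N z /\ r ^+ s n \in z) \/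
  (typ (fun e => s n.+1 <= e)%N z /\ r ^+ s n.+1 \in z).
Proof.
case/fact_exps => l [Hl [-> Hs]].
case: (bclass n l Hl Hs) => [[H1 H2]|[H1 H2]]; [left|right]; split;
  try (by apply/mapP; eexists; [exact: H2|]);
  by move=> a /mapP [e he ->]; exists e; split => //; apply: H1.
Qed.

Definition mu (l : seq nat) := (\sum_(e <- l) p ^ e)%N.

Lemma cnt_gt0 (t : nat) l : (0 < count_mem t l)%N = (t \in l).
Proof. by rewrite -has_count has_pred1. Qed.

Lemma sum_split_r (t : nat) l :
  \sum_(e <- l) r ^+ e = r ^+ t *+ count_mem t l + \sum_(e <- [seq e <- l | e != t]) r ^+ e.
Proof. by rewrite (perm_big _ (perm_split t l)) big_cat /= sum_nseqr. Qed.

Lemma sum_split_n (F : nat -> nat) (t : nat) l :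
  (\sum_(e <- l) F e = count_mem t l * F t + \sum_(e <- [seq e <- l | e != t]) F e)%N.
Proof. by rewrite (perm_big _ (perm_split t l)) big_cat /= sum_nseqn. Qed.

Lemma trade x k l : (forall k, x <> betti_elt r s k) ->
  (forall e, e \in l -> N e) -> \sum_(e <- l) r ^+ e = x ->
  (q ^ (s k.+1 - s k) <= count_mem (s k.+1) l)%N ->
  exists l', [/\ (forall e, e \in l' -> N e), \sum_(e <- l') r ^+ e = x,
     (mu l' < mu l)%N & exists e, e \in l /\ e \in l'].
Proof.
move=> Hx Hl Hs Hc.
set t := s k.+1 in Hc *; set h := s k; set d := (t - h)%N.
have ht : (h < t)%N by exact: hs.1.
have htd : (h + d)%N = t by rewrite /d subnKC // ltnW.
set c := count_mem t l in Hc; set rest := [seq e <- l | e != t].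
exists (nseq (p ^ d) h ++ nseq (c - q ^ d) t ++ rest); split.
- move=> e; rewrite !mem_cat !mem_nseq => /orP [/andP [_ /eqP ->]|/orP [/andP [_ /eqP ->]|]].
  + exact: Ns.
  + exact: Ns.
  + by rewrite mem_filter => /andP [_]; apply: Hl.
- rewrite -Hs (sum_split_r t l) !big_cat /= !sum_nseqr addrA; congr (_ + _).
  rewrite -/c [in RHS](_ : c = q ^ d + (c - q ^ d))%N; last by rewrite subnKC.
  rewrite mulrnDr; congr (_ + _).
  by rewrite -[r ^+ h *+ _]mulr_natl -[r ^+ t *+ _]mulr_natl trade_eq htd.
- rewrite /mu (sum_split_n _ t l) !big_cat /= !sum_nseqn -/c -/rest.
  rewrite -expnD [(d + h)%N]addnC htd.
  have Q2 : (1 < q ^ d)%N.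
    apply: leq_trans q_gt1 _; rewrite -{1}(expn1 q) leq_pexp2l ?q_gt0 //.
    by rewrite subn_gt0.
  have P1 : (0 < p ^ t)%N by rewrite expn_gt0 p_gt0.
  have := ltn_Pmull Q2 P1.
  have E : (c * p ^ t = (c - q ^ d) * p ^ t + q ^ d * p ^ t)%N by rewrite -mulnDl subnK.
  lia.
- case: (ltnP (q ^ d) c) => hc.
  + exists t; rewrite -cnt_gt0 !mem_cat !mem_nseq; split; first lia.
    by rewrite subn_gt0 hc eqxx orbT.
  + case Hr: rest => [|a rr].
      exfalso; apply: (Hx k).
      have cq : c = (q ^ d)%N by apply/eqP; rewrite eqn_leq hc Hc.
      rewrite -Hs (sum_split_r t l) -/rest Hr big_nil addr0 -/c cq /betti_elt numq_p.
      rewrite -[r ^+ t *+ _]mulr_natl -/h -/d.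
      have -> : (p%:Z)%:~R = p%:R :> rat by [].
      by rewrite -natrX trade_eq htd.
    exists a; have : a \in rest by rewrite Hr inE eqxx.
    rewrite mem_filter => /andP [_ ha]; split => //.
    by rewrite !mem_cat inE eqxx !orbT.
Qed.

Definition qnormal (l : seq nat) :=
  forall k, (count_mem (s k.+1) l < q ^ (s k.+1 - s k))%N.

Lemma exists_max (l : seq nat) : l != [::] -> exists2 t, t \in l & forall e, e \in l -> (e <= t)%N.
Proof.
elim: l => // a l IH _; case: (eqVneq l [::]) => [->|ne].
  by exists a; rewrite ?inE // => e; rewrite inE => /eqP ->.
have [t ht Ht] := IH ne; case: (leqP a t) => hat'.
  exists t; first by rewrite inE ht orbT.
  by move=> e; rewrite inE => /orP [/eqP ->|]; [|apply: Ht].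
exists a; first by rewrite inE eqxx.
move=> e; rewrite inE => /orP [/eqP ->//|he]; exact: leq_trans (Ht e he) (ltnW hat').
Qed.

Lemma maxlemma l1 l2 t :
  (forall e, e \in l1 -> N e) -> (forall e, e \in l2 -> N e) ->
  \sum_(e <- l1) r ^+ e = \sum_(e <- l2) r ^+ e ->
  t \in l1 -> (forall e, e \in l1 ++ l2 -> (e <= t)%N) ->
  (forall e, e \in l1 -> e \in l2 -> False) -> qnormal l1 -> False.
Proof.
move=> H1 H2 Hs ht Hmax disj qn.
have [k tk] := Nex (H1 t ht).
case: k tk => [|k] tk.
  have l2nil : l2 = [::].
    case: l2 H2 Hs Hmax disj => // a l2 H2 Hs Hmax disj; exfalso.
    have ha : a \in a :: l2 by rewrite inE eqxx.
    have : a = t.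
      apply/eqP; rewrite eqn_leq Hmax ?mem_cat ?ha ?orbT //= -tk.
      exact: s_min (H2 a ha).
    by move=> eat; apply: (disj a) => //; rewrite eat.
  move: Hs; rewrite l2nil big_nil => /sumr_eq0 l1nil.
  by rewrite l1nil in ht.
set h := s k.
have below : forall e, e \in l1 ++ l2 -> e != t -> (e <= h)%N.
  move=> e he net; have : N e by move: he; rewrite mem_cat => /orP [/H1|/H2].
  case/(gap k) => // ge; have := Hmax e he; rewrite -tk => le.
  have ee : e = s k.+1 by apply/eqP; rewrite eqn_leq le ge.
  by rewrite ee tk eqxx in net.
have hh : (h < t)%N by rewrite -tk; exact: hs.1.
set c := count_mem t l1.
have c0 : (0 < c)%N by rewrite cnt_gt0.
have cq : (c < q ^ (t - h))%N by rewrite /c -tk; exact: qn k.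
set rest := [seq e <- l1 | e != t].
have Hrest : forall e, e \in rest -> (e <= h)%N.
  by move=> e; rewrite mem_filter => /andP [ne he]; apply: below; rewrite ?mem_cat ?he.
have Hl2 : forall e, e \in l2 -> (e <= h)%N.
  move=> e he; apply: below; first by rewrite mem_cat he orbT.
  by apply/eqP => et; apply: (disj e) => //; rewrite et.
have DE : D l1 t = D l2 t.
  apply/eqP; rewrite -(eqr_nat rat) !Dcast ?Hs //.
  - by move=> e he; apply: Hmax; rewrite mem_cat he orbT.
  - by move=> e he; apply: Hmax; rewrite mem_cat he.
have D1 : D l1 t = (c * (p ^ t * q ^ (t - t)) + D rest t)%N by rewrite /D (sum_split_n _ t l1).
have dv2 : (q ^ (t - h) %| D l2 t)%N by apply: Ddvdq => //; exact: ltnW.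
have dvr : (q ^ (t - h) %| D rest t)%N by apply: Ddvdq => //; exact: ltnW.
have : (q ^ (t - h) %| c * p ^ t)%N.
  have : (q ^ (t - h) %| D l1 t)%N by rewrite DE.
  by rewrite D1 dvdn_addl // subnn expn0 muln1.
rewrite Gauss_dvdl; last by rewrite coprimeXl // coprimeXr // coprime_sym cop.
move/(dvdn_leq c0); lia.
Qed.

Lemma conn x : (forall k, x <> betti_elt r s k) -> forall m l1 l2,
  (forall e, e \in l1 -> N e) -> (forall e, e \in l2 -> N e) ->
  \sum_(e <- l1) r ^+ e = x -> \sum_(e <- l2) r ^+ e = x ->
  (mu l1 + mu l2 < m)%N -> Rrel r N x (map R l1) (map R l2).
Proof.
move=> Hx; elim=> [|m IH] // l1 l2 H1 H2 S1 S2 Hm.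
have F1 : is_fact r N x (map R l1) by rewrite -S1; exact: exps_fact.
have F2 : is_fact r N x (map R l2) by rewrite -S2; exact: exps_fact.
case: (boolP (has (fun e => e \in l2) l1)) => sh.
  case/hasP: sh => e e1 e2; apply: Rrel_one => //; exists (R e); split; exact: map_f.
case: (classic (exists k, (q ^ (s k.+1 - s k) <= count_mem (s k.+1) l1)%N)) => [[k hk]|n1].
  have [l1' [H1' S1' mu1 [e [e1 e1']]]] := trade x k l1 Hx H1 S1 hk.
  have F1' : is_fact r N x (map R l1') by rewrite -S1'; exact: exps_fact.
  apply: (@Rrel_trans _ _ (map R l1')).
    by apply: Rrel_one => //; exists (R e); split; exact: map_f.
  by apply: IH => //; lia.
case: (classic (exists k, (q ^ (s k.+1 - s k) <= count_mem (s k.+1) l2)%N)) => [[k hk]|n2].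
  have [l2' [H2' S2' mu2 [e [e2 e2']]]] := trade x k l2 Hx H2 S2 hk.
  have F2' : is_fact r N x (map R l2') by rewrite -S2'; exact: exps_fact.
  apply: (@Rrel_trans _ _ (map R l2')).
    by apply: IH => //; lia.
  by apply: Rrel_one => //; exists (R e); split; exact: map_f.
have qn1 : qnormal l1 by move=> k; rewrite ltnNge; apply/negP => h; apply: n1; exists k.
have qn2 : qnormal l2 by move=> k; rewrite ltnNge; apply/negP => h; apply: n2; exists k.
move/hasPn: sh => sh.
case: (eqVneq (l1 ++ l2) [::]) => [E|ne].
  by case: l1 E F1 {H1 S1 Hm qn1 sh n1} => //; case: l2 F2 {H2 S2 qn2 n2} => // F2 _ F1; apply: Rrel_refl.
exfalso; have [t ht Ht] := exists_max _ ne.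
move: ht; rewrite mem_cat => /orP [ht|ht].
- apply: (maxlemma l1 l2 t H1 H2 _ ht Ht _ qn1); first by rewrite S1 S2.
  by move=> e e1 e2; move: (sh e e1); rewrite e2.
- apply: (maxlemma l2 l1 t H2 H1 _ ht _ _ qn2); first by rewrite S1 S2.
  + by move=> e he; apply: Ht; move: he; rewrite !mem_cat orbC.
  + by move=> e e2 e1; move: (sh e e1); rewrite e2.
Qed.

Lemma betti_eq n : betti_elt r s n = (p ^ (s n.+1 - s n))%:R * r ^+ s n.
Proof. by rewrite /betti_elt numq_p natrX. Qed.

Lemma z1fact n : is_fact r N (betti_elt r s n) (map R (nseq (p ^ (s n.+1 - s n)) (s n)))
  /\ r ^+ s n \in map R (nseq (p ^ (s n.+1 - s n)) (s n)).
Proof.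
split.
  have := exps_fact (nseq (p ^ (s n.+1 - s n)) (s n)).
  rewrite sum_nseqr betti_eq mulr_natl; apply => e; rewrite mem_nseq => /andP [_ /eqP ->].
  exact: Ns.
apply: (map_f R); by rewrite mem_nseq expn_gt0 p_gt0 eqxx.
Qed.

Lemma z2fact n : is_fact r N (betti_elt r s n) (map R (nseq (q ^ (s n.+1 - s n)) (s n.+1)))
  /\ r ^+ s n.+1 \in map R (nseq (q ^ (s n.+1 - s n)) (s n.+1)).
Proof.
split.
  have := exps_fact (nseq (q ^ (s n.+1 - s n)) (s n.+1)).
  rewrite sum_nseqr -mulr_natl betti_eq trade_eq subnKC; last exact/ltnW/hs.1.
  apply => e; rewrite mem_nseq => /andP [_ /eqP ->]; exact: Ns.
apply: (map_f R); by rewrite mem_nseq expn_gt0 q_gt0 eqxx.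
Qed.

Lemma main_sec :
  (forall x : rat, is_Betti r N x <-> exists n : nat, x = betti_elt r s n) /\
  (forall n : nat,
     let x := betti_elt r s n in
     (forall z, is_fact r N x z ->
        Rclass_is r N x z (Rx r N x (r ^+ s n)) \/
        Rclass_is r N x z (Rx r N x (r ^+ s n.+1))) /\
     (exists z, is_fact r N x z /\ Rclass_is r N x z (Rx r N x (r ^+ s n))) /\
     (exists z, is_fact r N x z /\ Rclass_is r N x z (Rx r N x (r ^+ s n.+1)))).
Proof.
have part2 : forall n,
  let x := betti_elt r s n in
  (forall z, is_fact r N x z -> r ^+ s n \in z -> Rclass_is r N x z (Rx r N x (r ^+ s n))) /\
  (forall z, is_fact r N x z -> r ^+ s n.+1 \in z -> Rclass_is r N x z (Rx r N x (r ^+ s n.+1))).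
  move=> n x; have ht : (s n < s n.+1)%N by exact: hs.1.
  split.
  - apply: (class_gen x (fun e => e <= s n)%N (fun e => s n.+1 <= e)%N (s n) (s n.+1)).
    + move=> e /= h1 h2; lia.
    + by [].
    + by [].
    + move=> z hz; exact: typeB.
  - apply: (class_gen x (fun e => s n.+1 <= e)%N (fun e => e <= s n)%N (s n.+1) (s n)).
    + move=> e /= h1 h2; lia.
    + by [].
    + by [].
    + move=> z hz; case: (typeB _ _ hz); [right|left]; by [].
split.
  move=> x; split.
    case=> z [z' [f1 [f2 nr]]]; apply: NNPP => nex.
    have Hx : forall k, x <> betti_elt r s k by move=> k e; apply: nex; exists k.
    have [l1 [H1 [E1 S1]]] := fact_exps _ _ f1; have [l2 [H2 [E2 S2]]] := fact_exps _ _ f2.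
    apply: nr; rewrite E1 E2; exact: (conn x Hx (mu l1 + mu l2).+1 l1 l2 H1 H2 S1 S2 (ltnSn _)).
  case=> n ->; have [f1 m1] := z1fact n; have [f2 m2] := z2fact n.
  exists (map R (nseq (p ^ (s n.+1 - s n)) (s n))), (map R (nseq (q ^ (s n.+1 - s n)) (s n.+1))).
  split => //; split => // hr.
  have [P1 _] := part2 n.
  have [/(_ hr) [_ m] _] := P1 _ f1 m1 (map R (nseq (q ^ (s n.+1 - s n)) (s n.+1))).
  move/mapP: m => [e]; rewrite mem_nseq => /andP [_ /eqP ->] /rexp_inj.
  have := hs.1 n; lia.
move=> n x; have [P1 P2] := part2 n; split; last split.
- move=> z hz; case: (typeB _ _ hz) => [[_ m]|[_ m]]; [left; exact: P1|right; exact: P2].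
- have [f1 m1] := z1fact n; exists (map R (nseq (p ^ (s n.+1 - s n)) (s n))); split => //.
  exact: P1.
- have [f2 m2] := z2fact n; exists (map R (nseq (q ^ (s n.+1 - s n)) (s n.+1))); split => //.
  exact: P2.
Qed.

End Main.

Theorem mainTheorem7 (r : rat) (N : nat -> Prop) (s : nat -> nat) :
  0 < r -> numerical_monoid N -> increasing_enum N s ->
  ~ (exists m : nat, r = m%:R) ->  (* nontrivial *)
  atomic r N ->
  (forall x : rat, is_Betti r N x <-> exists n : nat, x = betti_elt r s n) /\
  (forall n : nat,
     let x := betti_elt r s n in
     (forall z, is_fact r N x z ->
        Rclass_is r N x z (Rx r N x (r ^+ s n)) \/
        Rclass_is r N x z (Rx r N x (r ^+ s n.+1))) /\
     (exists z, is_fact r N x z /\ Rclass_is r N x z (Rx r N x (r ^+ s n))) /\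
     (exists z, is_fact r N x z /\ Rclass_is r N x z (Rx r N x (r ^+ s n.+1)))).
Proof. move=> h1 h2 h3 h4 h5; exact: main_sec. Qed.
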